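(* Let $(\Omega,\mathcal F)$ be one of $(\{1,\dots,n\},2^{\{1,\dots,n\}})$, $(\mathbb N,2^{\mathbb N})$, or $([0,1],\mathcal B([0,1]))$, let $\mathcal X$ be the set of bounded measurable functions on it, and let $v$ be a continuous binary capacity. Then $I_v$ is convex on $\mathcal X$ if and only if there exists a finite set $A\subseteq\Omega$ such that $I_v(X)=\max_{\omega\in A}X(\omega)$ for all $X\in\mathcal X$.
   Context: A binary capacity is an increasing function $v:\mathcal F\to\{0,1\}$ (i.e. $v(A)\le v(B)$ for $A\subseteq B$) with $v(\varnothing)=0$, $v(\Omega)=1$; it is continuous if $v(A_n)\to0$ whenever $A_n\in\mathcal F$ decrease to $\varnothing$. $I_v(X)=\int_{-\infty}^0(v(X\ge x)-1)\,\mathrm dx+\int_0^\infty v(X\ge x)\,\mathrm dx$. Convexity means $I_v(\lambda X+(1-\lambda)Y)\le\lambda I_v(X)+(1-\lambda)I_v(Y)$ for all $\lambda\in[0,1]$, $X,Y\in\mathcal X$. *)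

(* Defs.v *)
From HB Require Import structures.
From mathcomp Require Import all_boot all_order all_algebra.
From mathcomp Require Import all_classical all_reals all_analysis.
Set Implicit Arguments. Unset Strict Implicit. Unset Printing Implicit Defensive.
Import Order.TTheory GRing.Theory Num.Theory.
Import numFieldNormedType.Exports.
Local Open Scope classical_set_scope.
Local Open Scope ring_scope.

Section Choquet.
Context {R : realType} {T : Type}.
(* Omega : the sample space (as a subset of T), F : the sigma-algebra
   (a family of subsets of Omega), XX : the admissible random variables. *)
Variables (Omega : set T) (F : set (set T)) (XX : set (T -> R)).

Definition upper (X : T -> R) (x : R) : set T := [set w | Omega w /\ x <= X w].

Definition binary_capacity (v : set T -> bool) : Prop :=
  v set0 = false /\ v Omega = true /\
  (forall A B, F A -> F B -> A `<=` B -> (v A <= v B)%O).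

Definition continuous_capacity (v : set T -> bool) : Prop :=
  forall An : nat -> set T, (forall n, F (An n)) ->
    (forall n, An n.+1 `<=` An n) -> \bigcap_n An n = set0 ->
    (fun n => ((v (An n))%:R : R)) @ \oo --> 0.

Definition choquet (v : set T -> bool) (X : T -> R) : \bar R :=
  (\int[lebesgue_measure]_(x in `]-oo, 0%R[) (((v (upper X x))%:R - 1)%:E)
   + \int[lebesgue_measure]_(x in `[0%R, +oo[) (((v (upper X x))%:R)%:E))%E.

Definition choquet_convex (v : set T -> bool) : Prop :=
  forall (l : R), 0 <= l <= 1 -> forall X Y, XX X -> XX Y ->
    (choquet v (fun w => (l * X w + (1 - l) * Y w)%R)
     <= l%:E * choquet v X + (1 - l)%R%:E * choquet v Y)%E.

Definition is_max_over (A : set T) (X : T -> R) (m : R) : Prop :=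
  (exists2 w, A w & X w = m) /\ (forall w, A w -> X w <= m).

Definition prop5_on : Prop :=
  forall v : set T -> bool, binary_capacity v -> continuous_capacity v ->
    (choquet_convex v <->
     exists A : set T, [/\ finite_set A, A `<=` Omega &
       forall X, XX X -> exists2 m, is_max_over A X m & choquet v X = m%:E]).
End Choquet.

Definition bounded_on {R : realType} {T : Type} (D : set T) (X : T -> R) : Prop :=
  exists M : R, forall w, D w -> `|X w| <= M.

(* Main.v *)
Require Import Defs.
From HB Require Import structures.
From mathcomp Require Import all_boot all_order all_algebra.
From mathcomp Require Import all_classical all_reals all_analysis.
From mathcomp Require Import lra.
Import numFieldNormedType.Exports.
Import Order.TTheory GRing.Theory Num.Theory.
Local Open Scope classical_set_scope.
Local Open Scope ring_scope.
Section Int.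
Context {R : realType}.
Local Open Scope ereal_scope.

Lemma thr_int (g : R -> bool) (c : R) (b : bool) :
  (forall x, g x = (x < c ?<= if b)%R) ->
  \int[lebesgue_measure]_(x in `]-oo, 0%R[) ((((g x)%:R - 1)%R)%:E)
   + \int[lebesgue_measure]_(x in `[0%R, +oo[) (((g x)%:R)%:E) = c%:E.
Proof.
move=> hg.
pose S : set R := [set` Interval -oo%O (BSide (~~ b) c)].
have mS : measurable S by exact: measurable_itv.
have hS : forall x, g x = (x \in S).
  by move=> x; rewrite hg /S mem_setE; case: (b); rewrite /= in_itv.
have e1 : forall x : R, (((g x)%:R - 1 : R)%R)%:E = (- ((\1_(~` S) x : R)%:E))%E.
  move=> x; rewrite indicE hS in_setC; case: (x \in S) => /=.
    by rewrite subrr /= ?oppr0 ?oppe0.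
  by rewrite sub0r EFinN.
under eq_integral do rewrite e1.
rewrite integral_ge0N; last by move=> x _; rewrite lee_fin.
under [X in _ + X]eq_integral do rewrite hS -indicE.
rewrite !integral_indic //; last exact: measurableC.
have -> : ~` S `&` `]-oo, 0%R[ = [set` Interval (BSide (~~ b) c) (BLeft 0%R)].
  apply/seteqP; split => x /=; rewrite /S /= !in_itv /=; case: (b) => /=.
  - by move=> [/negP]; rewrite -ltNge => -> ->.
  - by move=> [/negP]; rewrite -leNgt => -> ->.
  - by move=> /andP[h ->]; split=> //; apply/negP; rewrite -ltNge.
  - by move=> /andP[h ->]; split=> //; apply/negP; rewrite -leNgt.
have -> : S `&` `[0%R, +oo[ = [set` Interval (BLeft 0%R) (BSide (~~ b) c)].
  apply/seteqP; split => x /=; rewrite /S /= !in_itv /=; case: (b) => /=.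
  - by move=> [-> ->].
  - by move=> [-> ->].
  - by move=> /andP[-> ->].
  - by move=> /andP[-> ->].
have L := @lebesgue_measure_itv R.
change (- lebesgue_measure [set` Interval (BSide (~~ b) c) (BLeft 0%R)] + lebesgue_measure [set` Interval (BLeft 0%R) (BSide (~~ b) c)] = c%:E)%E.
rewrite !L /= !lte_fin.
case: ifPn => h1; case: ifPn => h2.
- by exfalso; move: h1 h2 => /lt_trans H /H; rewrite ltxx.
- by rewrite -EFinD add0r opprK addr0.
- by rewrite oppr0 -EFinD addr0 oppr0 add0r.
- have -> : c = 0%R by apply/le_anti/andP; split; rewrite leNgt.
  by rewrite oppe0 adde0.
Qed.
End Int.

Section Gen.
Context {R : realType} {T : Type} (Omega : set T) (F : set (set T)) (XX : set (T -> R)).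
Variable v : set T -> bool.
Hypothesis hv : binary_capacity Omega F v.
Hypothesis Fsub : forall A, F A -> A `<=` Omega.
Arguments Fsub {A}.

Hypothesis XXup : forall X, XX X -> forall x, F (upper Omega X x).

Lemma vset0 : v set0 = false. Proof. by case: hv. Qed.
Lemma vOmega : v Omega = true. Proof. by case: hv => _ []. Qed.
Lemma vmono A B : F A -> F B -> A `<=` B -> v A -> v B.
Proof. by case: hv => _ [] _ h FA FB AB; have := h A B FA FB AB; case: (v A); case: (v B). Qed.

Lemma choquet_thr (X : T -> R) (c : R) b : (forall x, v (upper Omega X x) = (x < c ?<= if b)%R) ->
  choquet Omega v X = c%:E.
Proof. by move=> h; rewrite /choquet; exact: (@thr_int R (fun x => v (upper Omega X x)) c b h). Qed.

Lemma thr_step (X : T -> R) (a : R) (S : set T) : (0 < a)%R ->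
  (forall x, (x <= 0)%R -> upper Omega X x = Omega) ->
  (forall x, (0 < x <= a)%R -> upper Omega X x = S) ->
  (forall x, (a < x)%R -> v (upper Omega X x) = false) ->
  choquet Omega v X = ((v S)%:R * a)%:E.
Proof.
move=> a0 h1 h2 h3; apply: (@choquet_thr X _ true) => x /=.
have [x0|x0] := leP x 0%R.
  rewrite h1 // vOmega; apply/esym; apply: (le_trans x0).
  by apply: mulr_ge0 => //; apply: ltW.
have [xa|xa] := leP x a.
  by rewrite h2 ?x0 ?xa //; case: (v S); rewrite ?mul1r ?mul0r ?xa // leNgt x0.
rewrite h3 //; apply/esym/negbTE; rewrite -ltNge; apply: le_lt_trans xa.
by case: (v S); rewrite ?mul1r ?mul0r // ltW.
Qed.

Definition ind (A : set T) : T -> R := fun w => ((w \in A)%:R : R).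

Lemma ind_ge0 A w : (0 <= ind A w)%R.
Proof. by rewrite /ind; case: (w \in A). Qed.
Lemma ind_le1 A w : (ind A w <= 1)%R.
Proof. by rewrite /ind; case: (w \in A). Qed.

Lemma ch_ind A : F A -> choquet Omega v (ind A) = ((v A)%:R)%:E.
Proof.
move=> FA; rewrite (@thr_step _ 1%R A) ?mulr1 //.
- move=> x x0; apply/seteqP; split => w /=; first by case.
  by move=> Ow; split => //; apply: le_trans x0 (ind_ge0 _ _).
- move=> x /andP[x0 x1]; apply/seteqP; split => w /=.
    move=> [Ow]; rewrite /ind; have [/set_mem //|_] := boolP (w \in A).
    by rewrite leNgt x0.
  move=> Aw; split; first exact: Fsub Aw.
  by rewrite /ind mem_set.
- move=> x x1; have -> : upper Omega (ind A) x = set0; last exact: vset0.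
  apply/seteqP; split => w //= [_ h].
  by move: (le_trans h (ind_le1 A w)); rewrite leNgt x1.
Qed.

Lemma ch_pair A B : F A -> F B -> v A = false ->
  (forall x, F (upper Omega (fun w => 2^-1 * ind A w + (1 - 2^-1) * ind B w)%R x)) ->
  choquet Omega v (fun w => 2^-1 * ind A w + (1 - 2^-1) * ind B w)%R
   = ((v (A `|` B))%:R * 2^-1)%:E.
Proof.
move=> FA FB vA FZ; rewrite (@thr_step _ 2^-1%R (A `|` B)) //.
- move=> x x0; apply/seteqP; split => w /=; first by case.
  move=> Ow; split => //; apply: le_trans x0 _.
  by have := ind_ge0 A w; have := ind_ge0 B w; lra.
- move=> x /andP[x0 x1]; apply/seteqP; split => w /=.
    move=> [Ow]; rewrite /ind.
    have [/set_mem hA|_] := boolP (w \in A); first by left.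
    have [/set_mem hB|_] := boolP (w \in B); first by right.
    by rewrite /= => h; exfalso; move: h x0; lra.
  move=> ABw; split; first by case: ABw => [/(Fsub FA) |/(Fsub FB)].
  rewrite /ind; case: ABw => [/mem_set ->|/mem_set ->].
    by have := ind_ge0 B w; rewrite /ind /=; lra.
  by have := ind_ge0 A w; rewrite /ind /=; lra.
- move=> x x1; apply/negbTE/negP => hv1.
  suff : v A by rewrite vA.
  apply: (@vmono _ _ (FZ x) FA _ hv1) => w [Ow].
  rewrite /ind; have [/set_mem //|_] := boolP (w \in A).
  by have := ind_le1 B w; rewrite /ind /=; lra.
Qed.

Hypothesis XXind : forall A, F A -> XX (ind A).
Arguments XXind {A}.
Hypothesis XXconv : forall (l : R) X Y, (0 <= l <= 1)%R -> XX X -> XX Y ->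
  XX (fun w => l * X w + (1 - l) * Y w)%R.

Lemma ideal : choquet_convex Omega XX v -> forall A B, F A -> F B ->
  v A = false -> v B = false -> v (A `|` B) = false.
Proof.
move=> cv A B FA FB vA vB.
have hl : (0 <= (2^-1 : R) <= 1)%R by apply/andP; split; lra.
have XZ := @XXconv _ _ _ hl (XXind FA) (XXind FB).

have := cv _ hl _ _ (XXind FA) (XXind FB).
rewrite (@ch_pair A B FA FB vA (XXup _ XZ)) !ch_ind // vA vB.
case: (v (A `|` B)) => //=; rewrite -!EFinM -EFinD lee_fin; lra.
Qed.

Hypothesis F0 : F set0.
Hypothesis FU : forall A B, F A -> F B -> F (A `|` B).
Hypothesis FI : forall A B, F A -> F B -> F (A `&` B).
Hypothesis F1 : forall w, Omega w -> F [set w].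
Hypothesis FO : F Omega.
Arguments FU {A B}. Arguments FI {A B}. Arguments F1 {w}.

Fixpoint unionN (N : nat -> set T) (k : nat) : set T :=
  if k is k'.+1 then unionN N k' `|` N k' else set0.

Lemma unionNP N k w : unionN N k w <-> exists2 j, (j < k)%N & N j w.
Proof.
elim: k => [|k IH] /=; first by split => // -[].
split.
  case=> [/IH [j jk Nj]|Nk]; last by exists k.
  by exists j => //; apply: ltn_trans jk _.
move=> [j]; rewrite ltnS leq_eqVlt => /orP[/eqP ->|jk Nj]; first by right.
by left; apply/IH; exists j.
Qed.

Section WithIdeal.
Hypothesis idl : forall A B, F A -> F B ->
  v A = false -> v B = false -> v (A `|` B) = false.

Lemma null_union N k : (forall j, (j < k)%N -> F (N j) /\ v (N j) = false) ->
  F (unionN N k) /\ v (unionN N k) = false.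
Proof.
elim: k => [|k IH] h /=; first by split => //; exact: vset0.
have [FU1 vU1] : F (unionN N k) /\ v (unionN N k) = false.
  by apply: IH => j jk; apply: h; apply: ltn_trans jk _.
have [FN vN] := h k (ltnSn k).
by split; [apply: FU | apply: idl].
Qed.

Variables (m : nat) (p : nat -> T) (k : nat) (N : nat -> set T).
Hypothesis hN : forall j, (j < k)%N -> F (N j) /\ v (N j) = false.
Arguments hN {j}.
Hypothesis cov : forall w, Omega w ->
  (exists2 i, (i < m)%N & w = p i) \/ (exists2 j, (j < k)%N & N j w).

Let A0 := [set w | Omega w /\ v [set w]].

Lemma key B : F B -> v B -> exists w, B w /\ A0 w.
Proof.
move=> FB vB; apply: contrapT => nex.
have h1 : forall i, (i < m)%N -> F (B `&` [set p i]) /\ v (B `&` [set p i]) = false.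
  move=> i im; have [Bp|nBp] := pselect (B (p i)).
    have -> : B `&` [set p i] = [set p i].
      by apply/seteqP; split => w /=; [case | move=> ->].
    have Op : Omega (p i) := Fsub FB _ Bp.
    split; first exact: F1.
    apply/negbTE/negP => vp; apply: nex; exists (p i); split => //.
  have -> : B `&` [set p i] = set0.
    by apply/seteqP; split => w //= [Bw wp]; apply: nBp; rewrite -wp.
  by split => //; exact: vset0.
have h2 : forall j, (j < k)%N -> F (B `&` N j) /\ v (B `&` N j) = false.
  move=> j jk; have [FN vN] := hN jk.
  split; first exact: FI.
  apply/negbTE/negP => vBN.
  have : v (N j) by apply: (@vmono _ _ (FI FB FN) FN _ vBN) => w [].
  by rewrite vN.
have [FU1 vU1] := @null_union (fun i => B `&` [set p i]) m h1.
have [FU2 vU2] := @null_union (fun j => B `&` N j) k h2.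
have : v (unionN (fun i => B `&` [set p i]) m `|` unionN (fun j => B `&` N j) k).
  apply: (@vmono _ _ FB (FU FU1 FU2) _ vB) => w Bw.
  case: (cov _ (Fsub FB _ Bw)) => [[i im wp]|[j jk Nw]].
    by left; apply/unionNP; exists i => //; rewrite -wp.
  by right; apply/unionNP; exists j => //; split.
by rewrite idl.
Qed.

Lemma A0_sub : A0 `<=` [set w | exists2 i, (i < m)%N & w = p i].
Proof.
move=> w [Ow vw]; case: (cov _ Ow) => // -[j jk Nw].
have [FN vN] := hN jk.
have : v (N j) by apply: (@vmono _ _ (F1 Ow) FN _ vw) => x /= ->.
by rewrite vN.
Qed.

Lemma A0_finite : finite_set A0.
Proof.
apply: (@sub_finite_set _ _ (p @` `I_m)); last exact/finite_image/finite_II.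
by move=> w /A0_sub [i im ->]; exists i.
Qed.

Lemma max_ex (X : T -> R) n : (exists2 i, (i < n)%N & A0 (p i)) ->
  exists i, [/\ (i < n)%N, A0 (p i) &
    forall j, (j < n)%N -> A0 (p j) -> (X (p j) <= X (p i))%R].
Proof.
elim: n => [[i]//|n IH] [i]; rewrite ltnS leq_eqVlt => /orP[/eqP ->{i}|iin Ai].
  move=> An.
  have [hex|hnex] := pselect (exists2 i, (i < n)%N & A0 (p i)).
    have [j [jn Aj hj]] := IH hex.
    have [le|lt] := leP (X (p n)) (X (p j)).
      exists j; split => //; first by apply: ltn_trans jn _.
      move=> l; rewrite ltnS leq_eqVlt => /orP[/eqP -> //|]; exact: hj.
    exists n; split => // l; rewrite ltnS leq_eqVlt => /orP[/eqP -> //|ln Al].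
    by apply: le_trans (hj l ln Al) (ltW lt).
  exists n; split => // l; rewrite ltnS leq_eqVlt => /orP[/eqP -> //|ln Al].
  by exfalso; apply: hnex; exists l.
have [j [jn Aj hj]] := IH (ex_intro2 _ _ i iin Ai).
have [le|lt] := pselect (A0 (p n) /\ (X (p j) < X (p n))%R).
  exists n; split => //; first by case: le.
  move=> l; rewrite ltnS leq_eqVlt => /orP[/eqP -> //|ln Al].
  by apply: le_trans (hj l ln Al) (ltW le.2).
exists j; split => //; first by apply: ltn_trans jn _.
move=> l; rewrite ltnS leq_eqVlt => /orP[/eqP ->|ln Al]; last exact: hj.
move=> An; rewrite leNgt; apply/negP => h; exact: lt (conj An h).
Qed.

Lemma core_char : exists A, [/\ finite_set A, A `<=` Omega &
  forall X, XX X -> exists2 mm, is_max_over A X mm & choquet Omega v X = mm%:E].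
Proof.
exists A0; split; [exact: A0_finite | by move=> w [] | move=> X XX_X].
have [w [Ow Aw]] := @key Omega FO vOmega.
have [i im wp] := A0_sub _ Aw; subst w.
have [j [jm Aj hj]] := @max_ex X m (ex_intro2 _ _ i im Aw).
exists (X (p j)).
  split; first by exists (p j).
  by move=> x /[dup] /A0_sub [l lm ->]; apply: hj.
apply: (@choquet_thr X _ true) => x /=.
have [xle|xgt] := boolP (x <= X (p j))%R.
  apply: (@vmono _ _ (F1 Aj.1) (XXup _ XX_X x) _ Aj.2) => y /= ->; split => //.
  exact: Aj.1.
apply/negbTE/negP => vu.
have [y [[Oy xy] Ay]] := @key _ (XXup _ XX_X x) vu.
have [l lm ey] := A0_sub _ Ay.
have := hj l lm; rewrite -ey => /(_ Ay) h.
by move: xgt; rewrite (le_trans xy h).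
Qed.
End WithIdeal.

End Gen.

Lemma gen_prop5 {R : realType} {T : Type} (Omega : set T) (F : set (set T))
  (XX : set (T -> R))
  (Fsub : forall A, F A -> A `<=` Omega)
  (XXup : forall X, XX X -> forall x, F (upper Omega X x))
  (XXind : forall A, F A -> XX (ind A))
  (XXconv : forall (l : R) X Y, (0 <= l <= 1)%R -> XX X -> XX Y ->
     XX (fun w => l * X w + (1 - l) * Y w)%R)
  (F0 : F set0) (FU : forall A B, F A -> F B -> F (A `|` B))
  (FI : forall A B, F A -> F B -> F (A `&` B))
  (F1 : forall w, Omega w -> F [set w]) (FO : F Omega)
  (cover : forall v, binary_capacity Omega F v -> @continuous_capacity R T F v ->
    (forall A B, F A -> F B -> v A = false -> v B = false -> v (A `|` B) = false) ->
    exists (m : nat) (p : nat -> T) (k : nat) (N : nat -> set T), (forall j, (j < k)%N -> F (N j) /\ v (N j) = false) /\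
      (forall w, Omega w ->
        (exists2 i, (i < m)%N & w = p i) \/ (exists2 j, (j < k)%N & N j w))) :
  prop5_on Omega F XX.
Proof.
move=> v hv cc; split.
  move=> cv; have idl := @ideal R T Omega F XX v hv Fsub XXup XXind XXconv cv.
  have [m [p [k [N [hN cov]]]]] := cover v hv cc idl.
  exact: (@core_char R T Omega F XX v hv Fsub XXup F0 FU FI F1 FO idl m p k N hN cov).
move=> [A [finA AO hA]] l hl X Y XX_X XX_Y.
have [mZ [[w Aw eZ] _] ->] := hA _ (XXconv l X Y hl XX_X XX_Y).
have [mX [_ hX] ->] := hA _ XX_X.
have [mY [_ hY] ->] := hA _ XX_Y.
rewrite -eZ -!EFinM -EFinD lee_fin.
case/andP: hl => l0 l1.
apply: lerD; apply: ler_wpM2l; rewrite ?subr_ge0 //; [exact: hX | exact: hY].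
Qed.

Lemma bounded_conv {R : realType} {T : Type} (D : set T) (l : R) (X Y : T -> R) :
  (0 <= l <= 1)%R -> bounded_on D X -> bounded_on D Y ->
  bounded_on D (fun w => l * X w + (1 - l) * Y w)%R.
Proof.
move=> /andP[l0 l1] [M1 h1] [M2 h2]; exists (`|M1| + `|M2|)%R => w Dw.
apply: (le_trans (ler_normD _ _)); rewrite !normrM (ger0_norm l0).
rewrite (@ger0_norm _ (1 - l)); last by lra.
have a1 := le_trans (h1 w Dw) (ler_norm M1).
have a2 := le_trans (h2 w Dw) (ler_norm M2).
have b1 := normr_ge0 (X w). have b2 := normr_ge0 (Y w).
nra.
Qed.

Lemma bounded_ind {R : realType} {T : Type} (D : set T) (A : set T) :
  bounded_on D (@ind R T A).
Proof. by exists 1%R => w _; rewrite /ind; case: (w \in A); rewrite ?normr1 ?normr0. Qed.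

Lemma prop_In {R : realType} (n : nat) :
  @prop5_on R 'I_n setT setT (fun X : 'I_n -> R => bounded_on setT X).
Proof.
apply: gen_prop5 => //.
- move=> A _; exact: bounded_ind.
- by move=> l X Y hl hX hY; apply: bounded_conv.
move=> v [v0 [vT _]] _ _.
case: n v v0 vT => [|n] v v0 vT.
  have : [set: 'I_0] = set0 by apply/seteqP; split => -[].
  by move=> e; move: vT; rewrite e v0.
exists n.+1, (fun i => inord i), 0%N, (fun _ => set0); split => // w _.
by left; exists (val w); [exact: ltn_ord | rewrite inord_val].
Qed.

Lemma prop_nat {R : realType} :
  @prop5_on R nat setT setT (fun X : nat -> R => bounded_on setT X).
Proof.
apply: gen_prop5 => //.
- move=> A _; exact: bounded_ind.
- by move=> l X Y hl hX hY; apply: bounded_conv.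
move=> v [v0 [vT _]] cc _.
pose An := fun n : nat => [set j : nat | (n <= j)%N].
have := cc An (fun _ => I) _ _.
have dec : forall n, An n.+1 `<=` An n by move=> n j /= /ltnW.
have cap : \bigcap_n An n = set0.
  by apply/seteqP; split => // j /(_ j.+1 I); rewrite /An /= ltnn.
move=> /(_ dec cap) /cvgrPdist_lt /(_ (2^-1)%R) /=.
have h2 : (0 < 2^-1 :> R)%R by lra.
move=> /(_ h2) [N0 _ hN0].
have vN : v (An N0) = false.
  have := hN0 N0 (leqnn _); rewrite sub0r normrN.
  by case: (v (An N0)) => //=; rewrite normr1; lra.
exists N0, id, 1%N, (fun _ => An N0); split => // w _.
have [wN|wN] := ltnP w N0; first by left; exists w.
by right; exists 0%N.
Qed.

Lemma prop_01 {R : realType} :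
  @prop5_on R R (`[0, 1]%classic : set R)
    (fun A : set R => A `<=` (`[0, 1]%classic : set R) /\ measurable A)
    (fun X : R -> R => bounded_on (`[0, 1]%classic : set R) X /\
                       measurable_fun (`[0, 1]%classic : set R) X).
Proof.
apply: gen_prop5.
- by move=> A [].
- move=> X [_ mX] x; split; first by move=> w [].
  have -> : upper `[0%R, 1%R] X x = `[0%R, 1%R] `&` X @^-1` `[x, +oo[.
    by apply/seteqP; split => w /= [h1 h2]; split => //; move: h2; rewrite in_itv /= andbT.
  by apply: mX; exact: measurable_itv.
- move=> A [_ mA]; split; first exact: bounded_ind.
  have -> : ind A = \1_A :> (R -> R) by apply/funext => w; rewrite indicE.
  exact: measurable_realfun.measurable_indic.
- move=> l X Y hl [bX mX] [bY mY]; split; first exact: bounded_conv.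
  by apply: measurable_realfun.measurable_funD; apply: measurable_realfun.measurable_funM => //; exact: measurable_cst.
- by split; [exact: sub0set | exact: measurable0].
- by move=> A B [sA mA] [sB mB]; split; [move=> w [/sA|/sB] | exact: measurableU].
- by move=> A B [sA mA] [sB mB]; split; [move=> w [/sA] | exact: measurableI].
- by move=> w Ow; split; [move=> y -> | exact: measurable_set1].
- by split => //; exact: measurable_itv.
- move=> v hv cc idl.
pose S := fun (w : R) (n : nat) =>
  `[0%R, 1%R] `&` ball w ((n.+1)%:R^-1 : R) `&` ~` [set w].
have FS : forall w n, S w n `<=` `[0%R, 1%R] /\ measurable (S w n).
  move=> w n; split; first by move=> y [[]].
  apply: measurableI; last by apply: measurableC; exact: measurable_set1.
  apply: measurableI; first exact: measurable_itv.
  exact: measurable_realfun.measurable_ball.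
have hS : forall w, exists n, v (S w n) = false.
  move=> w; have := cc (S w) (FS w) _ _.
  have dec : forall n, S w n.+1 `<=` S w n.
    move=> n y [[h0 hb] hne]; split => //; split => //.
    apply: le_ball hb; rewrite lef_pV2 ?posrE ?ltr0n // ler_nat.
    exact: leqnSn.
  have cap : \bigcap_n S w n = set0.
    apply/seteqP; split => // y hy.
    have [[_ _] /eqP hne] := hy 0%N I.
    have e0 : (0 < `|w - y|)%R by rewrite normr_gt0 subr_eq0 eq_sym.
    have [N1 _ hN1] := near_infty_natSinv_lt (PosNum e0).
    have [[_ hb] _] := hy N1 I.
    move: hb; rewrite -ball_normE /ball_ /= => hb.
    have := lt_trans hb (hN1 N1 (leqnn _)); by rewrite ltxx.
  move=> /(_ dec cap) /cvgrPdist_lt /(_ (2^-1)%R) /=.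
  have h2 : (0 < 2^-1 :> R)%R by lra.
  move=> /(_ h2) [N0 _ hN0]; exists N0.
  have := hN0 N0 (leqnn _); rewrite sub0r normrN.
  by case: (v (S w N0)) => //=; rewrite normr1; lra.
have [nw hnw] := choice hS.
have cpt := @segment_compact R 0%R 1%R; rewrite compact_cover in cpt.
have ho : forall i, (`[0%R, 1%R]%classic : set R) i -> open (ball i (((nw i).+1)%:R^-1 : R)).
  by move=> i _; exact: ball_open.
have hc : (`[0%R, 1%R]%classic : set R) `<=` cover (`[0%R, 1%R]%classic : set R) (fun w => ball w (((nw w).+1)%:R^-1 : R)).
  move=> w Dw; exists w => //; apply: ballxx.
  by rewrite invr_gt0 ltr0n.
have [D' sD' covD'] := cpt R _ _ ho hc.
  pose s := finmap.enum_fset D'.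
  exists (size s), (fun i => nth 0%R s i), (size s),
    (fun j => S (nth 0%R s j) (nw (nth 0%R s j))); split.
    by move=> j _; split; [exact: FS | exact: hnw].
  move=> w Dw; have [i iD bi] := covD' w Dw.
  have iS : i \in s by [].
  have [wi|wi] := pselect (w = i).
    by left; exists (index i s); rewrite ?index_mem ?nth_index.
  right; exists (index i s); rewrite ?index_mem ?nth_index //.
Qed.


Theorem proposition5 (R : realType) :
  (* Omega = {1,...,n} (modelled by 'I_n), F = power set, X = all functions *)
  (forall n : nat,
     @prop5_on R 'I_n setT setT (fun X : 'I_n -> R => bounded_on setT X)) /\
  (* Omega = N, F = power set, X = bounded functions *)
  @prop5_on R nat setT setT (fun X : nat -> R => bounded_on setT X) /\
  (* Omega = [0,1], F = Borel subsets of [0,1], X = bounded Borel functions *)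
  @prop5_on R R (`[0, 1]%classic : set R)
    (fun A : set R => A `<=` (`[0, 1]%classic : set R) /\ measurable A)
    (fun X : R -> R => bounded_on (`[0, 1]%classic : set R) X /\
                       measurable_fun (`[0, 1]%classic : set R) X).
Proof.
split; first by move=> n; exact: prop_In.
split; [exact: prop_nat | exact: prop_01].
Qed.
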